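(* Let $n$ and $r$ be positive integers with $n\geq 2r$. For positive integers $l,k$ define the rational number $$m_r(l,k):=\frac{1}{k}\left(lr-\sum_{i=1}^{k-1}i\binom{l}{i}\right).$$ Let $l$ be the minimal positive integer such that there exists a positive integer $k\leq l+1$ satisfying $$0\leq m_r(l,k)\leq\binom{l}{k}\quad\text{and}\quad \sum_{i=0}^{k-1}\binom{l}{i}+m_r(l,k)\geq n.$$ Then $b(\mathrm{S}_{n,r})=b(\mathrm{A}_{n+1,r})=l$.
   Context: For a permutation group $G$ acting on a set $\Omega$, a base is a subset $\mathcal{B}\subseteq\Omega$ whose pointwise stabiliser in $G$ is trivial, and $b(G)$ denotes the minimum size of a base. Write $[n]=\{1,\dots,n\}$. $\mathrm{S}_{n,r}$ denotes the symmetric group $\mathrm{S}_n$ acting naturally on the set of $r$-element subsets of $[n]$, and $\mathrm{A}_{n+1,r}$ denotes the alternating group $\mathrm{A}_{n+1}$ acting naturally on the set of $r$-element subsets of $[n+1]$. Binomial coefficients $\binom{l}{k}$ with $k>l$ are $0$. *)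

(* Defs.v *)
From mathcomp Require Import all_boot all_order all_algebra all_fingroup.
From mathcomp Require Import alt.
Set Implicit Arguments. Unset Strict Implicit. Unset Printing Implicit Defensive.
Import GRing.Theory Num.Theory.

Definition is_base (T : finType) (G : {set {perm T}}) (r : nat)
    (B : {set {set T}}) : Prop :=
  (forall A, A \in B -> #|A| = r) /\
  (forall g : {perm T}, g \in G -> (forall A, A \in B -> g @: A = A) -> g = 1%g).

Definition base_size_is (T : finType) (G : {set {perm T}}) (r l : nat) : Prop :=
  (exists B, is_base G r B /\ #|B| = l) /\
  (forall B, is_base G r B -> l <= #|B|).

Definition b_S_is (n r l : nat) : Prop := base_size_is [set: {perm 'I_n}] r l.
Definition b_A_is (n r l : nat) : Prop := base_size_is ('Alt_('I_n.+1))%g r l.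

Definition m_r (r l k : nat) : rat :=
  (((l * r)%:Z - (\sum_(1 <= i < k) i * 'C(l, i))%N%:Z)%:~R / k%:R)%R.

Definition cond_l (n r l : nat) : Prop :=
  exists k : nat, [/\ 0 < k, k <= l.+1,
    (0 <= m_r r l k)%R, (m_r r l k <= ('C(l, k))%:R)%R &
    (n%:R <= (\sum_(0 <= i < k) 'C(l, i))%N%:R + m_r r l k)%R].

(* Main.v *)
Require Import Defs.
From mathcomp Require Import all_boot all_order all_algebra all_fingroup alt zify.
Set Implicit Arguments. Unset Strict Implicit. Unset Printing Implicit Defensive.
Import GRing.Theory Num.Theory.

Lemma sum_by_size (I : finType) (f : nat -> nat) :
  \sum_(S : {set I}) f #|S| = \sum_(0 <= i < #|I|.+1) 'C(#|I|, i) * f i.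
Proof.
rewrite big_mkord.
have hp : forall S : {set I}, #|S| < #|I|.+1 by move=> S; rewrite ltnS max_card.
rewrite (partition_big (fun S : {set I} => Ordinal (hp S)) xpredT) //=.
apply: eq_bigr => i _.
rewrite (eq_bigr (fun _ => f i)); last first.
  by move=> S /eqP <-.
rewrite sum_nat_const -card_draws; congr (_ * _).
apply: eq_card => S; rewrite inE; apply/eqP/eqP => [<-|h] //.
Qed.

Definition Qs (L k : nat) := \sum_(1 <= i < k) i * 'C(L, i).
Definition Ss (L k : nat) := \sum_(0 <= i < k) 'C(L, i).

Lemma sum_from1 (g : nat -> nat) k : g 0 = 0 ->
  \sum_(1 <= i < k) g i = \sum_(0 <= i < k) g i.
Proof.
move=> g0; case: k => [|k]; first by rewrite !big_geq.
by rewrite [RHS]big_ltn // g0 add0n.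
Qed.

Lemma range_conv (g : nat -> nat) k L : k <= L.+1 ->
  \sum_(0 <= i < L.+1) g i * (i < k) = \sum_(0 <= i < k) g i.
Proof.
move=> hk; rewrite (big_cat_nat (leq0n k) hk) /=.
have -> : \sum_(k <= i < L.+1) g i * (i < k) = 0.
  rewrite big_nat_cond big1 // => i /andP[/andP[hi _] _].
  by rewrite ltnNge hi muln0.
rewrite addn0; apply: eq_big_nat => i /andP[_ ->]; by rewrite muln1.
Qed.

Lemma Qs_rec L k : Qs L k.+1 = Qs L k + k * 'C(L, k).
Proof.
rewrite /Qs !sum_from1 ?mul0n // big_nat_recr //.
Qed.

Lemma Ss_sets (I : finType) k : k <= #|I|.+1 ->
  Ss #|I| k = \sum_(S : {set I}) (#|S| < k).
Proof.
move=> hk; rewrite (@sum_by_size I (fun i => (i < k) : nat)) /Ss.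
by rewrite -(range_conv _ hk).
Qed.

Lemma Qs_sets (I : finType) k : k <= #|I|.+1 ->
  Qs #|I| k = \sum_(S : {set I}) (#|S| < k) * #|S|.
Proof.
move=> hk; rewrite (@sum_by_size I (fun i => (i < k) * i)) /Qs sum_from1 ?mul0n //.
rewrite -(range_conv _ hk); apply: eq_bigr => i _.
by rewrite mulnC [in RHS]mulnC mulnA.
Qed.

Lemma sum_sizes (I : finType) : 2 * \sum_(S : {set I}) #|S| = #|I| * 2 ^ #|I|.
Proof.
have e : \sum_(S : {set I}) #|S| = \sum_(S : {set I}) #|~: S|.
  by rewrite (reindex_inj (@setC_inj I)).
rewrite mul2n -addnn {2}e -big_split /=.
rewrite (eq_bigr (fun _ => #|I|)); last by move=> S _; rewrite cardsC.
rewrite sum_nat_const mulnC; congr (_ * _).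
have -> : 2 ^ #|I| = #|powerset [set: I]| by rewrite card_powerset cardsT.
by apply: eq_card => S; rewrite /= powersetE subsetT.
Qed.

Lemma ratc (x : int) (k c s n : nat) : 0 < k ->
 [/\ (0 <= x%:~R / k%:R :> rat)%R = (0 <= x)%R,
     (x%:~R / k%:R <= c%:R :> rat)%R = (x <= (c * k)%:Z)%R &
     (n%:R <= s%:R + x%:~R / k%:R :> rat)%R = ((n * k)%:Z <= (s * k)%:Z + x)%R].
Proof.
move=> k0; have kp : (0 < k%:R :> rat)%R by rewrite ltr0n.
split.
- by rewrite ler_pdivlMr // mul0r ler0z.
- by rewrite ler_pdivrMr // -natrM -[((c * k)%:R : rat)]/(((c * k)%:Z)%:~R : rat) ler_int.
- rewrite -lerBlDl ler_pdivlMr // mulrBl -!natrM.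
  rewrite -[((n * k)%:R : rat)]/(((n * k)%:Z)%:~R : rat).
  rewrite -[((s * k)%:R : rat)]/(((s * k)%:Z)%:~R : rat).
  by rewrite -intrB ler_int lerBlDl.
Qed.

Definition cond_nat n r L := exists k, [/\ 0 < k, k <= L.+1, Qs L k <= L * r,
  L * r <= Qs L k + k * 'C(L, k) & n * k + Qs L k <= Ss L k * k + L * r].

Lemma cond_iff n r L : cond_l n r L <-> cond_nat n r L.
Proof.
split.
- case=> k [k0 kL h1 h2 h3]; exists k.
  have [e1 e2 e3] := ratc ((L * r)%:Z - (Qs L k)%:Z) ('C(L, k)) (Ss L k) n k0.
  rewrite /m_r -/(Qs L k) in h1 h2 h3.
  rewrite e1 in h1; rewrite e2 in h2. rewrite /Ss e3 in h3.
  split => //; lia.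
- case=> k [k0 kL h1 h2 h3]; exists k.
  have [e1 e2 e3] := ratc ((L * r)%:Z - (Qs L k)%:Z) ('C(L, k)) (Ss L k) n k0.
  rewrite /m_r -/(Qs L k) e1 e2 /Ss -/(Ss L k) e3.
  split => //; lia.
Qed.

Lemma card_setset (I : finType) (F : {set {set I}}) : #|F| <= 2 ^ #|I|.
Proof.
have -> : 2 ^ #|I| = #|powerset [set: I]| by rewrite card_powerset cardsT.
by apply: subset_leq_card; apply/subsetP => S _; rewrite powersetE subsetT.
Qed.

Lemma lb_core (I : finType) (F : {set {set I}}) n r :
  0 < r -> 2 * r <= n -> n <= #|F| -> \sum_(S in F) #|S| <= #|I| * r ->
  0 < #|I| /\ cond_l n r #|I|.
Proof.
move=> r0 rn nF wF.
have F2 := card_setset F.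
have L0 : 0 < #|I|.
  case: (posnP #|I|) => // e; rewrite e expn0 in F2; lia.
split => //; apply/cond_iff.
have hsum : #|I| * r <= \sum_(S : {set I}) #|S|.
  have := sum_sizes I => e.
  have : #|I| * (2 * r) <= #|I| * 2 ^ #|I| by apply: leq_mul => //; lia.
  lia.
have QL : Qs #|I| #|I|.+1 = \sum_(S : {set I}) #|S|.
  rewrite Qs_sets //; apply: eq_bigr => S _; by rewrite ltnS max_card mul1n.
pose P k := (0 < k) && (#|I| * r <= Qs #|I| k.+1).
have exP : exists k, P k by exists #|I|; rewrite /P L0 QL.
case: (ex_minnP exP) => k /andP[k0 hk] kmin.
have kL : k <= #|I| by apply: kmin; rewrite /P L0 QL.
have h1 : Qs #|I| k <= #|I| * r.
  move: k0 kmin hk kL; case: k => [//|[|k]] _ kmin _ _.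
    by rewrite /Qs big_geq.
  case Pk: (P k.+1); first by have := kmin _ Pk; rewrite ltnn.
  by move: Pk; rewrite /P /= => /negbT; rewrite -ltnNge => /ltnW.
exists k; split => //; first by lia.
  by rewrite -Qs_rec.
have a1 : #|F| * k <= \sum_(S in F) (k - #|S|) + \sum_(S in F) #|S|.
  rewrite -big_split /= -sum1_card big_distrl /=.
  apply: leq_sum => S _; lia.
have a2 : \sum_(S in F) (k - #|S|) <= \sum_(S : {set I}) (k - #|S|).
  rewrite [X in _ <= X](bigID (fun S => S \in F)) /=; exact: leq_addr.
have a3 : \sum_(S : {set I}) (k - #|S|) + Qs #|I| k = Ss #|I| k * k.
  have hk1 : k <= #|I|.+1 by lia.
  rewrite (Qs_sets hk1) (Ss_sets hk1) big_distrl -big_split /=.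
  apply: eq_bigr => S _; case: ltnP => h; rewrite /=; lia.
have a4 : n * k <= #|F| * k by apply: leq_mul.
lia.
Qed.

Definition deg (I : finType) (F : {set {set I}}) (j : I) := #|[set S in F | j \in S]|.

Lemma card_sumb (T : finType) (A : {set T}) (p : pred T) :
  #|[set x in A | p x]| = \sum_(x in A) p x.
Proof.
rewrite -sum1_card big_mkcond [RHS]big_mkcond /=; apply: eq_bigr => x _.
by rewrite inE; case: (x \in A); case: (p x).
Qed.

Lemma sum_mem (I : finType) (S : {set I}) : \sum_(i : I) (i \in S : nat) = #|S|.
Proof.
by rewrite -sum1_card [RHS]big_mkcond /=; apply: eq_bigr => i _; case: (i \in S).
Qed.

Lemma weight_deg (I : finType) (F : {set {set I}}) :
  \sum_(S in F) #|S| = \sum_(j : I) deg F j.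
Proof.
rewrite /deg; under [RHS]eq_bigr do rewrite card_sumb.
rewrite exchange_big /=; apply: eq_bigr => S _; by rewrite sum_mem.
Qed.

Lemma replace_deg (I : finType) (F : {set {set I}}) S S' i :
  S \in F -> S' \notin F ->
  deg (S' |: (F :\ S)) i + (i \in S) = deg F i + (i \in S').
Proof.
move=> SF S'F; rewrite /deg !card_sumb.
rewrite big_setU1 /=; last by rewrite !inE negb_and S'F orbT.
rewrite [in RHS](big_setD1 S SF) /=; lia.
Qed.

Lemma replace_card (I : finType) (F : {set {set I}}) S S' :
  S \in F -> S' \notin F -> #|S' |: (F :\ S)| = #|F|.
Proof.
move=> SF S'F; rewrite cardsU1 !inE negb_and S'F orbT (cardsD1 S F) SF.
done.
Qed.

Lemma swap_inv (I : finType) (S : {set I}) j j' :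
  j \in S -> j' \notin S -> j |: ((j' |: (S :\ j)) :\ j') = S.
Proof.
move=> jS j'S; apply/setP => x; rewrite !inE.
case: (eqVneq x j) => [->|xj] //=.
case: (eqVneq x j') => [->|xj'] //=; by rewrite (negbTE j'S).
Qed.

Lemma exists_swap (I : finType) (F : {set {set I}}) j j' :
  deg F j' < deg F j ->
  exists S, [/\ S \in F, j \in S, j' \notin S & j' |: (S :\ j) \notin F].
Proof.
move=> hlt.
case: (pickP [pred S | [&& S \in F, j \in S, j' \notin S & j' |: (S :\ j) \notin F]]).
  by move=> S /and4P[*]; exists S.
move=> hno; exfalso.
pose A := [set S in F | (j \in S) && (j' \notin S)].
pose C := [set S in F | (j' \in S) && (j \notin S)].
pose phi := fun S : {set I} => j' |: (S :\ j).
have hA : #|A| <= #|C|.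
  have inj : {in A &, injective phi}.
    move=> S T; rewrite !inE => /and3P[_ jS j'S] /and3P[_ jT j'T] e.
    by rewrite -(swap_inv jS j'S) -(swap_inv jT j'T); congr (_ |: (_ :\ _)); exact: e.
  rewrite -(card_in_imset inj); apply: subset_leq_card.
  apply/subsetP => x /imsetP[S]; rewrite inE => /and3P[SF jS j'S] ->.
  have := hno S; rewrite /= SF jS j'S /= => /negbFE phiF.
  rewrite inE phiF /phi !inE eqxx /=.
  have jj' : j != j' by apply: contraNneq j'S => <-.
  by rewrite (negbTE jj') eqxx.
have e1 : deg F j + #|C| = deg F j' + #|A|.
  rewrite /deg /A /C !card_sumb -!big_split /=; apply: eq_bigr => T _.
  by case: (j \in T); case: (j' \in T).
lia.
Qed.

Lemma exists_add (I : finType) (F : {set {set I}}) j :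
  2 * deg F j < #|F| -> exists S, [/\ S \in F, j \notin S & j |: S \notin F].
Proof.
move=> hlt.
case: (pickP [pred S | [&& S \in F, j \notin S & j |: S \notin F]]).
  by move=> S /and3P[*]; exists S.
move=> hno; exfalso.
pose A := [set S in F | j \notin S].
have hA : #|A| <= deg F j.
  have inj : {in A &, injective (fun S : {set I} => j |: S)}.
    move=> S T; rewrite !inE => /andP[_ jS] /andP[_ jT] e.
    by rewrite -(setU1K jS) -(setU1K jT) e.
  rewrite -(card_in_imset inj); apply: subset_leq_card.
  apply/subsetP => x /imsetP[S]; rewrite inE => /andP[SF jS] ->.
  have := hno S; rewrite /= SF jS /= => /negbFE phiF.
  by rewrite inE phiF !inE eqxx.
have e1 : deg F j + #|A| = #|F|.
  rewrite /deg /A !card_sumb -big_split /= -sum1_card; apply: eq_bigr => S _.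
  by case: (j \in S).
lia.
Qed.

Definition mu (I : finType) (F : {set {set I}}) r := \sum_(i : I) (r - deg F i).

Lemma sum_lt (I : finType) (f g : I -> nat) i0 :
  (forall i, f i <= g i) -> f i0 < g i0 -> \sum_i f i < \sum_i g i.
Proof.
move=> hle hlt; rewrite (bigD1 i0) //= [X in _ < X](bigD1 i0) //=.
rewrite -addSn; apply: leq_add => //; apply: leq_sum => i _; exact: hle.
Qed.

Lemma step_mu (I : finType) (F : {set {set I}}) S S' j' r :
  S \in F -> S' \notin F -> j' \notin S -> j' \in S' -> deg F j' < r ->
  (forall i, i \in S -> i \notin S' -> r < deg F i) ->
  mu (S' |: (F :\ S)) r < mu F r.
Proof.
move=> SF S'F j'S j'S' dj' hi; apply: (sum_lt (i0 := j')).
  move=> i; have := replace_deg i SF S'F.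
  case iS: (i \in S); case iS': (i \in S') => /= e; try lia.
  have := hi i iS; rewrite iS' => /(_ isT); lia.
have := replace_deg j' SF S'F; rewrite (negbTE j'S) j'S' /=; lia.
Qed.

Lemma sum_deg_repl (I : finType) (F : {set {set I}}) S S' :
  S \in F -> S' \notin F ->
  \sum_i deg (S' |: (F :\ S)) i + #|S| = \sum_i deg F i + #|S'|.
Proof.
move=> SF S'F; rewrite -!sum_mem -!big_split /=; apply: eq_bigr => i _.
exact: replace_deg.
Qed.

Lemma all_eq (I : finType) (f : I -> nat) r :
  (forall i, r <= f i) -> \sum_i f i <= #|I| * r -> forall i, f i = r.
Proof.
move=> hge hs i; apply/eqP; rewrite eqn_leq hge andbT.
rewrite leqNgt; apply/negP => hlt.
have : \sum_(i0 : I) r < \sum_i f i by apply: (sum_lt (i0 := i)).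
rewrite sum_nat_const; change (#|I| * r < \sum_i0 f i0 -> False); rewrite ltnNge hs; done.
Qed.

Lemma balance (I : finType) r N : 2 * r <= N.+1 ->
  forall F : {set {set I}}, #|F| = N -> set0 \notin F ->
  \sum_j deg F j <= #|I| * r ->
  exists F' : {set {set I}}, [/\ #|F'| = N, set0 \notin F' & forall j, deg F' j = r].
Proof.
move=> rN F; move: {2}(mu F r) (leqnn (mu F r)) => m.
elim: m F => [|m IH] F hm FN F0 Fw.
- exists F; split => // j; apply: all_eq Fw j => i.
  move: hm; rewrite leqn0 /mu sum_nat_eq0 => /forallP /(_ i) /=; lia.
- case: (pickP (fun j => deg F j < r)) => [j' dj'|hall]; last first.
    exists F; split => // j; apply: all_eq Fw j => i.
    by have := hall i; rewrite /= ltnNge => /negbFE.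
  have F0' : forall (S S' : {set I}), S' != set0 -> set0 \notin S' |: (F :\ S).
    move=> S S' h; rewrite !inE negb_or eq_sym h /= negb_and F0 orbT //.
  case: (pickP (fun j => r < deg F j)) => [j dj|hle].
    have [S [SF jS j'S nF]] := exists_swap (F:=F) (j:=j) (j':=j') (ltn_trans dj' dj).
    have j'S' : j' \in j' |: (S :\ j) by rewrite setU11.
    apply: (IH (j' |: (S :\ j) |: (F :\ S))).
    + have := step_mu SF nF j'S j'S' dj'.
      have hi : forall i, i \in S -> i \notin j' |: (S :\ j) -> r < deg F i.
        move=> i iS; rewrite !inE iS andbT negb_or => /andP[_ /negbNE /eqP ->] //.
      move=> /(_ hi); by move=> h; rewrite -ltnS (leq_trans h hm).
    + by rewrite replace_card.
    + apply: F0'; apply/set0Pn; by exists j'.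
    + have := sum_deg_repl SF nF.
      rewrite cardsU1 !inE negb_and j'S orbT (cardsD1 j S) jS /=; move=> /eqP; rewrite eqn_add2r => /eqP ->; exact: Fw.
  have hd : 2 * deg F j' < #|F| by lia.
  have [S [SF j'S nF]] := exists_add hd.
  have j'S' : j' \in j' |: S by rewrite setU11.
  apply: (IH (j' |: S |: (F :\ S))).
  + have := step_mu SF nF j'S j'S' dj'.
    have hi : forall i, i \in S -> i \notin j' |: S -> r < deg F i.
      by move=> i iS; rewrite !inE iS orbT.
    by move=> /(_ hi) h; rewrite -ltnS (leq_trans h hm).
  + by rewrite replace_card.
  + apply: F0'; apply/set0Pn; by exists j'.
  + have := sum_deg_repl SF nF.
    rewrite cardsU1 (negbTE j'S) /=.
    have : \sum_i deg F i < \sum_(i : I) r.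
      apply: (sum_lt (i0 := j')) => // i; have := hle i; rewrite /= ltnNge => /negbFE //.
    rewrite sum_nat_const; change (\sum_i deg F i < #|I| * r -> \sum_i deg (j' |: S |: (F :\ S)) i + #|S| = \sum_i deg F i + (1 + #|S|) -> \sum_i deg (j' |: S |: (F :\ S)) i <= #|I| * r); lia.
Qed.

Lemma exists_sub (T : finType) (A : {set T}) m :
  m <= #|A| -> exists B : {set T}, B \subset A /\ #|B| = m.
Proof.
elim: m => [|m IH] h; first by exists set0; rewrite sub0set cards0.
have [B [BA Bm]] := IH (ltnW h).
have : 0 < #|A :\: B| by rewrite cardsDS // Bm subn_gt0.
rewrite card_gt0 => /set0Pn [x]; rewrite inE => /andP[xB xA].
exists (x |: B); split; first by rewrite subUset sub1set xA BA.
by rewrite cardsU1 xB Bm.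
Qed.

Lemma sum_U_le (T : finType) (A B : {set T}) (f : T -> nat) :
  \sum_(x in A :|: B) f x <= \sum_(x in A) f x + \sum_(x in B) f x.
Proof.
rewrite big_mkcond [X in _ <= X + _]big_mkcond [X in _ <= _ + X]big_mkcond -big_split /=.
apply: leq_sum => x _; rewrite inE; case: (x \in A); case: (x \in B) => //=; lia.
Qed.

Lemma sum_sub_le (T : finType) (A B : {set T}) (f : T -> nat) :
  A \subset B -> \sum_(x in A) f x <= \sum_(x in B) f x.
Proof.
move=> AB; rewrite big_mkcond [X in _ <= X]big_mkcond /=.
apply: leq_sum => x _; case xA: (x \in A) => //; by rewrite (subsetP AB x xA).
Qed.

Lemma card_setp (T : finType) (p : pred T) : #|[set x | p x]| = \sum_x p x.
Proof.
rewrite -sum1_card big_mkcond /=; apply: eq_bigr => x _.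
by rewrite !inE; case: (p x).
Qed.

Lemma init_family (I : finType) n r : 2 <= n -> cond_nat n r #|I| ->
  exists F : {set {set I}},
    [/\ #|F| = n.-1, set0 \notin F & \sum_(S in F) #|S| <= #|I| * r].
Proof.
move=> n2 [k [k0 kL h1 h2 h3]].
pose U0 := [set S : {set I} | #|S| < k].
pose U := U0 :\ set0.
pose V := [set S : {set I} | #|S| == k].
have U0c : #|U0| = Ss #|I| k by rewrite card_setp Ss_sets.
have Uc : #|U| = (Ss #|I| k).-1.
  have := cardsD1 set0 U0; rewrite -/U !inE cards0 k0 U0c /=; lia.
have Uw : \sum_(S in U) #|S| <= Qs #|I| k.
  rewrite Qs_sets // big_mkcond /=; apply: leq_sum => S _.
  rewrite !inE; case: (S == set0) => //=; case: ltnP => //=; lia.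
have Vc : #|V| = 'C(#|I|, k) by rewrite card_draws.
have hnC : n <= Ss #|I| k + 'C(#|I|, k).
  have : n * k <= (Ss #|I| k + 'C(#|I|, k)) * k by rewrite mulnDl; lia.
  by rewrite leq_pmul2r.
have S1 : 0 < Ss #|I| k by rewrite -U0c card_gt0; apply/set0Pn; exists set0; rewrite inE cards0.
have [W [WV Wc]] := exists_sub (m := n - Ss #|I| k) (A := V) ltac:(lia).
have [U' [U'U U'c]] := exists_sub (m := minn n.-1 (Ss #|I| k).-1) (A := U) ltac:(by rewrite Uc geq_minr).
have Ww : \sum_(S in W) #|S| = (n - Ss #|I| k) * k.
  rewrite -Wc (eq_bigr (fun _ => k)) ?sum_nat_const // => S SW.
  by have := subsetP WV S SW; rewrite inE => /eqP.
have disj : U' :&: W = set0.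
  apply/setP => S; rewrite !inE; apply/negP => /andP[/(subsetP U'U)].
  rewrite !inE => /andP[_ hS] /(subsetP WV); rewrite inE => /eqP e.
  by rewrite e ltnn in hS.
exists (U' :|: W); split.
- rewrite cardsU disj cards0 U'c Wc; lia.
- rewrite inE negb_or; apply/andP; split.
    by apply/negP => /(subsetP U'U); rewrite !inE eqxx.
  apply/negP => /(subsetP WV); rewrite inE cards0 => /eqP e; by rewrite -e in k0.
- have := sum_U_le U' W (fun S => #|S|).
  have := sum_sub_le (fun S : {set I} => #|S|) U'U.
  rewrite Ww mulnBl; move=> a b; apply: (leq_trans b); apply: (leq_trans (leq_add (leq_trans a Uw) (leqnn _))); lia.
Qed.

Lemma fixP (T : finType) (g : {perm T}) (A : {set T}) :
  (forall z, (g z \in A) = (z \in A)) -> g @: A = A.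
Proof.
move=> h; apply/eqP; rewrite eqEcard card_imset ?leqnn ?andbT; last exact: perm_inj.
by apply/subsetP => y /imsetP[z zA ->]; rewrite h.
Qed.

Lemma fixE (T : finType) (g : {perm T}) (A : {set T}) :
  g @: A = A -> forall z, (g z \in A) = (z \in A).
Proof.
move=> e z; rewrite -{1}e; exact: mem_imset perm_inj.
Qed.

Lemma perm_fix2 (T : finType) (X : eqType) (sg : T -> X) (g : {perm T}) b :
  (forall x, sg (g x) = sg x) -> {in [set~ b] &, injective sg} -> ~~ odd_perm g ->
  g = 1%g.
Proof.
move=> hs inj ev.
have H1 : forall z, z != b -> g z != b -> g z = z.
  move=> z zb gzb; apply: inj; rewrite ?inE //; exact: hs.
case: (pickP (fun a => (a != b) && (g a == b))) => [a /andP[ab /eqP gab] | none].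
  exfalso.
  have gab' : g a = g b -> False by move=> e; rewrite (perm_inj e) eqxx in ab.
  have gb : g b = a.
    apply/eqP; apply/negPn/negP => ca.
    have cb : g b != b by apply/negP => /eqP e; apply: gab'; rewrite e.
    have gc : g (g b) != b.
      apply/negP => /eqP e; have e' : g (g b) = g a by rewrite gab. by rewrite (perm_inj e') eqxx in ca.
    have := H1 _ cb gc => /perm_inj e; by rewrite e eqxx in cb.
  have gt : g = tperm a b.
    apply/permP => z; case: tpermP => [->|->|za zb] //.
    apply: H1; first by apply/eqP.
    apply/negP => /eqP e; rewrite -gab in e; exact: za (perm_inj e).
  by move: ev; rewrite gt odd_tperm ab.
apply/permP => z; rewrite perm1.
have H2 : forall z, z != b -> g z = z.
  move=> y yb; apply: H1 => //; have := none y; rewrite /= yb /= => /negbT //.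
case: (eqVneq z b) => [->|zb]; last exact: H2.
apply/eqP/negPn/negP => gbb.
have := H2 _ gbb; move/perm_inj => e; by rewrite e eqxx in gbb.
Qed.

Definition sigB (T : finType) (B : {set {set T}}) (x : T) : {set {A : {set T} | A \in B}} :=
  [set A : {A : {set T} | A \in B} | x \in val A].

Lemma lb_base (T : finType) r (B : {set {set T}}) n (D : {set T}) :
  0 < r -> 2 * r <= n -> (forall A, A \in B -> #|A| = r) -> n <= #|D| ->
  {in D &, injective (sigB B)} -> 0 < #|B| /\ cond_l n r #|B|.
Proof.
move=> r0 rn Br nD inj.
have cI : #|{: {A : {set T} | A \in B}}| = #|B| by rewrite card_sig.
rewrite -cI; apply: (lb_core (F := sigB B @: D)) => //.
  by rewrite card_in_imset.
rewrite big_imset //=.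
apply: (leq_trans (sum_sub_le (fun x => #|sigB B x|) (subsetT D))).
have -> : \sum_(x in [set: T]) #|sigB B x| = \sum_x #|sigB B x| by apply: eq_bigl => x; rewrite in_setT.
under eq_bigr do rewrite -sum_mem.
rewrite exchange_big /=.
rewrite (eq_bigr (fun _ => r)).
  by rewrite sum_nat_const.
move=> A _; rewrite -(Br _ (valP A)) -sum_mem; apply: eq_bigr => x _.
by rewrite inE.
Qed.

Lemma same_sig (T : finType) (B : {set {set T}}) x y :
  sigB B x = sigB B y -> forall A, A \in B -> (x \in A) = (y \in A).
Proof.
move=> e A AB; move/setP: e => /(_ (exist _ A AB)).
by rewrite /sigB !inE.
Qed.

Lemma tperm_mem (T : finType) (x y z : T) (A : {set T}) :
  (x \in A) = (y \in A) -> (tperm x y z \in A) = (z \in A).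
Proof. by move=> e; case: tpermP => [->|->|] //. Qed.

Lemma lb_S n r B : 0 < r -> 2 * r <= n -> is_base [set: {perm 'I_n}] r B ->
  0 < #|B| /\ cond_l n r #|B|.
Proof.
move=> r0 rn [Br Bb]; apply: (lb_base (D := [set: 'I_n])) => //.
  by rewrite cardsT card_ord.
move=> x y _ _ e.
have h := Bb (tperm x y) (in_setT _) (fun A AB => fixP (fun z => tperm_mem z (same_sig e AB))).
by have := congr1 (fun g : {perm 'I_n} => g x) h; rewrite tpermL perm1.
Qed.

Lemma lb_A n r B : 0 < r -> 2 * r <= n -> is_base ('Alt_('I_n.+1))%g r B ->
  0 < #|B| /\ cond_l n r #|B|.
Proof.
move=> r0 rn [Br Bb].
case: (pickP (fun p : 'I_n.+1 * 'I_n.+1 => (p.1 != p.2) && (sigB B p.1 == sigB B p.2)))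
  => [[x y] /andP[/= xy /eqP exy] | none].
  apply: (lb_base (D := [set~ y])) => //.
    by rewrite cardsC1 card_ord.
  move=> u v uD vD euv; apply/eqP/negPn/negP => uv.
  pose g := (tperm x y * tperm u v)%g.
  have gA : g \in ('Alt_('I_n.+1))%g by rewrite Alt_even odd_permM !odd_tperm xy uv.
  have hfix : forall A, A \in B -> g @: A = A.
    move=> A AB; apply: fixP => z.
    by rewrite permM (tperm_mem _ (same_sig euv AB)) (tperm_mem _ (same_sig exy AB)).
  have h := Bb g gA hfix.
  have := congr1 (fun g : {perm 'I_n.+1} => g y) h; rewrite permM tpermR perm1.
  move: uD vD; rewrite !inE.
  case: tpermP => [_|_|_ _] uD vD e; by rewrite e eqxx in uD vD xy.
apply: (lb_base (D := [set: 'I_n.+1])) => //.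
  by rewrite cardsT card_ord.
move=> x y _ _ e; apply/eqP/negPn/negP => xy.
by have := none (x, y); rewrite /= xy e eqxx.
Qed.

Section UB.
Variables (l n r N : nat) (F : {set {set 'I_l}}).
Hypotheses (Fc : #|F| = n.-1) (n0 : 0 < n) (F0 : set0 \notin F)
  (Fd : forall j, deg F j = r) (nN : n <= N).

Definition sq := enum (set0 |: F).
Lemma size_sq : size sq = n.
Proof. by rewrite /sq -cardE cardsU1 F0 Fc /= add1n prednK. Qed.

Definition sg (x : 'I_N) := nth set0 sq x.
Definition Bj (j : 'I_l) := [set x : 'I_N | j \in sg x].
Definition Bset := [set Bj j | j in [set: 'I_l]].

Lemma Bset_card : #|Bset| <= l.
Proof. by apply: leq_trans (leq_imset_card _ _) _; rewrite cardsT card_ord. Qed.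

Lemma Bj_card j : #|Bj j| = r.
Proof.
rewrite /Bj card_setp -(big_mkord xpredT (fun i => (j \in nth set0 sq i) : nat)).
rewrite (big_cat_nat (leq0n n) nN) /=.
have -> : \sum_(n <= i < N) (j \in nth set0 sq i) = 0.
  rewrite big_nat_cond big1 // => i /andP[/andP[hi _] _].
  by rewrite nth_default ?size_sq // inE.
rewrite addn0 -size_sq -(big_nth set0 xpredT (fun S => (j \in S) : nat)).
rewrite big_enum /= -(Fd j) /deg card_sumb big_setU1 //= inE add0n.
by [].
Qed.

Lemma Bset_r A : A \in Bset -> #|A| = r.
Proof. by case/imsetP => j _ ->; exact: Bj_card. Qed.

Lemma Bset_fix (g : {perm 'I_N}) : (forall A, A \in Bset -> g @: A = A) ->
  forall x, sg (g x) = sg x.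
Proof.
move=> h x; apply/setP => j.
have := fixE (h _ (imset_f Bj (in_setT j))) x.
by rewrite /Bj !inE.
Qed.

Lemma sg_inj : {in [set x : 'I_N | x < n] &, injective sg}.
Proof.
move=> x y; rewrite !inE => xn yn e; apply: val_inj; apply/eqP.
rewrite -(nth_uniq set0 (s := sq)) ?size_sq //; first by apply/eqP.
exact: enum_uniq.
Qed.
End UB.

Lemma ub_family (l n r : nat) : 2 * r <= n -> 2 <= n -> cond_l n r l ->
  exists F : {set {set 'I_l}}, [/\ #|F| = n.-1, set0 \notin F & forall j, deg F j = r].
Proof.
move=> rn n2 /cond_iff hc.
have hc' : cond_nat n r #|'I_l| by rewrite card_ord.
have [F [Fc F0 Fw]] := init_family n2 hc'.
rewrite weight_deg in Fw.
apply: (balance (N := n.-1)) Fc F0 Fw.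
by rewrite prednK //; lia.
Qed.

Lemma min_l n r l L : (forall l', 0 < l' -> l' < l -> ~ cond_l n r l') ->
  0 < L /\ cond_l n r L -> l <= L.
Proof.
move=> hmin [L0 hc]; rewrite leqNgt; apply/negP => h; exact: hmin L L0 h hc.
Qed.

Theorem theorem1p1 (n r l : nat) :
  0 < r -> 2 * r <= n ->
  0 < l -> cond_l n r l -> (forall l', 0 < l' -> l' < l -> ~ cond_l n r l') ->
  b_S_is n r l /\ b_A_is n r l.
Proof.
move=> r0 rn l0 hc hmin.
have n2 : 2 <= n by lia.
have [F [Fc F0 Fd]] := ub_family rn n2 hc.
have n0 : 0 < n by lia.
split; split.
- pose B := Bset n F.
  have hb : is_base [set: {perm 'I_n}] r B.
    split; first exact: (Bset_r Fc n0 F0 Fd).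
    move=> g _ hfix; apply/permP => x; rewrite perm1.
    apply: (sg_inj Fc n0 F0); rewrite ?inE ?ltn_ord //.
    exact: (Bset_fix hfix).
  exists B; split => //; apply/eqP; rewrite eqn_leq Bset_card /=.
  exact: min_l hmin (lb_S r0 rn hb).
- move=> B hb; exact: min_l hmin (lb_S r0 rn hb).
- pose B := Bset n.+1 F.
  have hb : is_base ('Alt_('I_n.+1))%g r B.
    split; first exact: (Bset_r Fc n0 F0 Fd).
    move=> g gA hfix; apply: (perm_fix2 (b := ord_max) (Bset_fix hfix)).
      move=> x y; rewrite !inE => xb yb; apply: (sg_inj Fc n0 F0); rewrite inE.
        by move: xb; rewrite -val_eqE /= => xb; have := ltn_ord x; lia.
      by move: yb; rewrite -val_eqE /= => yb; have := ltn_ord y; lia.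
    by rewrite -Alt_even.
  exists B; split => //; apply/eqP; rewrite eqn_leq Bset_card /=.
  exact: min_l hmin (lb_A r0 rn hb).
- move=> B hb; exact: min_l hmin (lb_A r0 rn hb).
Qed.
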